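(* Let $(B,\lfloor\cdot,\cdot\rfloor)$ be an SSD space with quadratic form $q$ and let $A\subset B$ be $q$-positive. Then $\mathcal{P}_q(\Phi_A^{@})$ is the smallest $q$-representable subset of $B$ containing $A$.
   Context: An SSD space is a pair $(B,\lfloor\cdot,\cdot\rfloor)$ with $B$ a nonzero real vector space and $\lfloor\cdot,\cdot\rfloor$ a symmetric bilinear form; $q(b)=\frac12\lfloor b,b\rfloor$. $w(B,B)$ is the coarsest topology on $B$ making all maps $b\mapsto\lfloor b,c\rfloor$ continuous. A nonempty $A\subset B$ is $q$-positive if $q(b-c)\ge0$ for all $b,c\in A$. $\Phi_A(x)=\sup_{a\in A}\{\lfloor x,a\rfloor-q(a)\}$. For proper convex $f$, $f^{@}(b)=\sup_{c\in B}\{\lfloor c,b\rfloor-f(c)\}$ and $\mathcal{P}_q(f)=\{b: f(b)=q(b)\}$. A $q$-positive set $A$ is $q$-representable if there is a $w(B,B)$-lower semicontinuous proper convex $f:B\to\mathbb{R}\cup\{+\infty\}$ with $f\ge q$ on $B$ and $\mathcal{P}_q(f)=A$. *)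

(* Defs.v *)
From mathcomp Require Import all_boot all_order all_algebra.
From mathcomp Require Import classical_sets reals constructive_ereal ereal.
Set Implicit Arguments. Unset Strict Implicit. Unset Printing Implicit Defensive.
Import Order.TTheory GRing.Theory Num.Theory.
Local Open Scope classical_set_scope.
Local Open Scope ring_scope.

Section SSD.
Variables (R : realType) (B : lmodType R) (bf : B -> B -> R).

Definition symmetric_bilinear : Prop :=
  (forall b c, bf b c = bf c b) /\
  (forall (a : R) (x y z : B), bf (a *: x + y) z = a * bf x z + bf y z).

Definition SSD_space : Prop := (exists b : B, b != 0) /\ symmetric_bilinear.

Definition qf (b : B) : R := bf b b / 2.

(* open sets of w(B,B): the initial topology of the maps b |-> bf b c,
   written out via its neighbourhood base *)
Definition wopen (U : set B) : Prop :=
  forall x, U x -> exists (s : seq B) (e : R), 0 < e /\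
    [set y | forall c, c \in s -> `|bf (y - x) c| < e] `<=` U.
Definition wclosed (S : set B) : Prop := wopen (~` S).

Definition wlsc (f : B -> \bar R) : Prop :=
  forall r : R, wclosed [set x | (f x <= r%:E)%E].

Definition proper_fun (f : B -> \bar R) : Prop :=
  (forall x, f x != -oo%E) /\ (exists x, (f x < +oo)%E).

Definition convex_fun (f : B -> \bar R) : Prop :=
  forall (x y : B) (t : R), 0 < t < 1 ->
    (f (t *: x + (1 - t) *: y)%R <= t%:E * f x + (1 - t)%:E * f y)%E.

Definition q_positive (A : set B) : Prop :=
  A !=set0 /\ forall b c, A b -> A c -> 0 <= qf (b - c).

Definition PhiA (A : set B) (x : B) : \bar R :=
  ereal_sup [set ((bf x a) - qf a)%:E | a in A].

Definition conj_at (f : B -> \bar R) (b : B) : \bar R :=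
  ereal_sup [set ((bf c b)%:E - f c)%E | c in [set: B]].

Definition Pq (f : B -> \bar R) : set B := [set b | f b = (qf b)%:E].

Definition q_representable (A : set B) : Prop :=
  q_positive A /\
  exists f : B -> \bar R, [/\ wlsc f, proper_fun f, convex_fun f,
    (forall b, ((qf b)%:E <= f b)%E) & Pq f = A].

End SSD.

(* Main.v *)
Require Import Defs.
From mathcomp Require Import all_boot all_order all_algebra.
From mathcomp Require Import classical_sets reals constructive_ereal ereal.
From mathcomp Require Import boolp ring lra.
Set Implicit Arguments. Unset Strict Implicit. Unset Printing Implicit Defensive.
Import Order.TTheory GRing.Theory Num.Theory.
Local Open Scope classical_set_scope.
Local Open Scope ring_scope.

Section Fin.
Variable R : realType.
Implicit Types (z : nat -> R).

Fixpoint nrm m z : R := if m is m'.+1 then Num.max (nrm m' z) `|z m'| else 0.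
Fixpoint dot m (l z : nat -> R) : R := if m is m'.+1 then dot m' l z + l m' * z m' else 0.

Definition vadd z1 z2 := fun i => z1 i + z2 i.
Definition vsc (t : R) z := fun i => t * z i.
Definition v0 : nat -> R := fun _ => 0.

Lemma infL (E : set R) L x : (forall y, E y -> L <= y) -> E x -> inf E <= x.
Proof. move=> HL Ex; apply: (ge_inf _ Ex); by exists L. Qed.
Lemma infG (E : set R) L x : E x -> (forall y, E y -> L <= y) -> L <= inf E.
Proof. move=> Ex HL; apply: lb_le_inf; [by exists x | exact HL]. Qed.

Definition local m (p : (nat -> R) -> R) :=
  forall z z', (forall i, (i < m)%N -> z i = z' i) -> p z = p z'.

Lemma dot_ext m l l' z : (forall i, (i < m)%N -> l i = l' i) -> dot m l z = dot m l' z.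
Proof.
elim: m => [//|m IH] H /=; rewrite IH ?H // => i Hi; apply: H; exact: ltnW.
Qed.

Lemma dot_extz m l z z' : (forall i, (i < m)%N -> z i = z' i) -> dot m l z = dot m l z'.
Proof.
elim: m => [//|m IH] H /=; rewrite IH ?H // => i Hi; apply: H; exact: ltnW.
Qed.

Lemma dot_sc m l c z : dot m l (vsc c z) = c * dot m l z.
Proof. elim: m => [|m IH] /=; first by rewrite mulr0. rewrite IH /vsc; ring. Qed.

Lemma nrm_ge0 m z : 0 <= nrm m z.
Proof. elim: m => [//|m IH] /=; by rewrite le_max IH. Qed.

Lemma nrm_ge m z i : (i < m)%N -> `|z i| <= nrm m z.
Proof.
elim: m => [//|m IH] Hi /=; rewrite le_max.
case: (ltngtP i m) => [h|h|->]; first by rewrite IH.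
  by move: Hi; rewrite ltnS leqNgt h.
by rewrite lexx orbT.
Qed.

Lemma nrm_add m z1 z2 : nrm m (vadd z1 z2) <= nrm m z1 + nrm m z2.
Proof.
elim: m => [|m IH] /=; first by rewrite addr0.
rewrite ge_max; apply/andP; split.
  apply: (le_trans IH); apply: lerD; by rewrite le_max lexx.
apply: (le_trans (ler_normD _ _)); apply: lerD; by rewrite le_max lexx orbT.
Qed.

Lemma nrm_sc m t z : nrm m (vsc t z) = `|t| * nrm m z.
Proof.
elim: m => [|m IH] /=; first by rewrite mulr0.
rewrite IH /vsc normrM. idtac.
case: (leP (nrm m z) `|z m|) => h.
  rewrite max_r //; exact: ler_wpM2l.
rewrite max_l //; apply: ler_wpM2l => //; exact: ltW.
Qed.

Lemma nrm_ext m z z' : (forall i, (i < m)%N -> z i = z' i) -> nrm m z = nrm m z'.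
Proof.
elim: m => [//|m IH] H /=; rewrite IH ?H // => i Hi; apply: H; exact: ltnW.
Qed.

Lemma nrm_v0 m : nrm m v0 = 0.
Proof. elim: m => [//|m IH] /=; by rewrite IH normr0 maxxx. Qed.

Lemma HB m : forall p : (nat -> R) -> R,
  (forall z1 z2, p (vadd z1 z2) <= p z1 + p z2) ->
  (forall t z, 0 < t -> p (vsc t z) <= t * p z) ->
  p v0 = 0 -> local m p ->
  exists l, forall z, dot m l z <= p z.
Proof.
elim: m => [|m IH] p Hadd Hhom H0 Hloc.
  exists v0 => z /=. by rewrite (Hloc z v0) ?H0.
pose upd z (t : R) := fun i => if i == m then t else z i.
pose a := p (upd v0 1).
have Hhom' : forall t z, 0 < t -> p (vsc t z) = t * p z.
  move=> t z t0; apply/eqP; rewrite eq_le Hhom //=.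
  have h := Hhom t^-1 (vsc t z); rewrite invr_gt0 in h; have {}h := h t0.
  have e1 : vsc t^-1 (vsc t z) = z.
    apply/funext => i; rewrite /vsc mulKf //; exact: lt0r_neq0.
  rewrite e1 in h.
  have := ler_wpM2l (ltW t0) h.
  by rewrite mulrA mulfV ?mul1r // lt0r_neq0.
have Hlow : forall t, a * t <= p (upd v0 t).
  move=> t; case: (ltgtP t 0) => ht.
  - have e1 : upd v0 t = vsc (- t) (upd v0 (-1)).
      apply/funext => i; rewrite /upd /vsc /v0; case: (i == m); ring.
    have e2 : v0 = vadd (upd v0 1) (upd v0 (-1)).
      apply/funext => i; rewrite /upd /vadd /v0; case: (i == m); ring.
    have h2 := Hadd (upd v0 1) (upd v0 (-1)); rewrite -e2 H0 in h2.
    rewrite e1 Hhom'; last by rewrite oppr_gt0.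
    rewrite /a; set pm := p (upd v0 (-1)) in h2 *; set pa := p (upd v0 1) in h2 *.
    have ht' : 0 < - t by rewrite oppr_gt0.
    nra.
  - have e1 : upd v0 t = vsc t (upd v0 1).
      apply/funext => i; rewrite /upd /vsc /v0; case: (i == m); ring.
    by rewrite e1 Hhom' // mulrC.
  - have e1 : upd v0 t = v0.
      apply/funext => i; rewrite /upd /v0 ht; by case: (i == m).
    by rewrite e1 H0 ht mulr0.
pose E z := [set y | exists t, y = p (upd z t) - a * t].
pose q z := inf (E z).
have Hlbq : forall z y, E z y -> - p (upd (vsc (-1) z) 0) <= y.
  move=> z y [t ->].
  have e1 : upd v0 t = vadd (upd z t) (upd (vsc (-1) z) 0).
    apply/funext => i; rewrite /upd /vadd /v0 /vsc; case: (i == m); ring.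
  have h1 := Hadd (upd z t) (upd (vsc (-1) z) 0); rewrite -e1 in h1.
  have h2 := Hlow t; lra.
have qle : forall z t, q z <= p (upd z t) - a * t.
  move=> z t; apply: (infL (Hlbq z)); by exists t.
have qge : forall z L, (forall t, L <= p (upd z t) - a * t) -> L <= q z.
  move=> z L HL; apply: (@infG _ _ (p (upd z 0) - a * 0)); first by exists 0.
  by move=> y [t ->].
have qadd : forall z1 z2, q (vadd z1 z2) <= q z1 + q z2.
  move=> z1 z2.
  have key : forall t1 t2, q (vadd z1 z2) <= (p (upd z1 t1) - a * t1) + (p (upd z2 t2) - a * t2).
    move=> t1 t2.
    have e1 : upd (vadd z1 z2) (t1 + t2) = vadd (upd z1 t1) (upd z2 t2).
      apply/funext => i; rewrite /upd /vadd; by case: (i == m).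
    have h1 := qle (vadd z1 z2) (t1 + t2); rewrite e1 in h1.
    have h2 := Hadd (upd z1 t1) (upd z2 t2). lra.
  have h3 : forall t2, q (vadd z1 z2) - (p (upd z2 t2) - a * t2) <= q z1.
    move=> t2; apply: qge => t1; have := key t1 t2; lra.
  have h4 : q (vadd z1 z2) - q z1 <= q z2.
    apply: qge => t2; have := h3 t2; lra.
  lra.
have qhom : forall t z, 0 < t -> q (vsc t z) <= t * q z.
  move=> t z t0.
  have h1 : t^-1 * q (vsc t z) <= q z.
    apply: qge => u.
    have e1 : upd (vsc t z) (t * u) = vsc t (upd z u).
      apply/funext => i; rewrite /upd /vsc; by case: (i == m).
    have h2 := qle (vsc t z) (t * u); rewrite e1 Hhom' // in h2.
    have h3 : q (vsc t z) <= t * (p (upd z u) - a * u) by lra.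
    have ti : 0 <= t^-1 by rewrite invr_ge0 ltW.
    have := ler_wpM2l ti h3; rewrite mulrA mulVf ?mul1r //; exact: lt0r_neq0.
  have := ler_wpM2l (ltW t0) h1; rewrite mulrA mulfV ?mul1r //; exact: lt0r_neq0.
have q0 : q v0 = 0.
  apply/eqP; rewrite eq_le; apply/andP; split.
    have := qle v0 0.
    have -> : upd v0 0 = v0 by apply/funext => i; rewrite /upd /v0; case: (i == m).
    by rewrite H0 mulr0 subr0.
  apply: qge => t; have := Hlow t; lra.
have qloc : local m q.
  move=> z z' Hzz.
  have He : E z = E z'.
    apply/funext => y; apply/propext; split => -[t ->]; exists t;
    congr (_ - _); apply: Hloc => i Hi; rewrite /upd; case: eqP => // /eqP him;
    [|symmetry]; apply: Hzz; by rewrite ltn_neqAle him -ltnS.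
  by rewrite /q He.
have [l' Hl'] := IH q qadd qhom q0 qloc.
exists (fun i => if i == m then a else l' i) => z /=.
rewrite eqxx (@dot_ext m _ l'); last by move=> i Hi; rewrite ltn_eqF.
have h1 := Hl' z; have h2 := qle z (z m).
have e : upd z (z m) = z by apply/funext => i; rewrite /upd; case: eqP => [->|].
rewrite e in h2; lra.
Qed.

Lemma SEPfin m (K : set (nat -> R)) e : 0 < e -> K !=set0 ->
  (forall k1 k2 t, K k1 -> K k2 -> 0 <= t <= 1 -> K (vadd (vsc t k1) (vsc (1 - t) k2))) ->
  (forall k, K k -> e <= nrm m k) ->
  exists l, forall k, K k -> 1 <= dot m l k.
Proof.
move=> e0 [k0 Kk0] Kconv Kfar.
pose M := e^-1.
have M0 : 0 < M by rewrite invr_gt0.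
have Me : M * e = 1 by rewrite mulVf // lt0r_neq0.
pose E z := [set y | exists s k, [/\ 0 <= s, K k & y = M * nrm m (vadd z (vsc s k)) - s]].
pose p z := inf (E z).
have Hlb : forall z y, E z y -> - (M * nrm m z) <= y.
  move=> z y [s [k [s0 Kk ->]]].
  have e1 : vsc s k = vadd (vadd z (vsc s k)) (vsc (-1) z).
    apply/funext => i; rewrite /vadd /vsc; ring.
  have h1 := nrm_add m (vadd z (vsc s k)) (vsc (-1) z).
  rewrite -e1 !nrm_sc normrN normr1 mul1r ger0_norm // in h1.
  have h2 := Kfar k Kk.
  have h3 : s * e <= s * nrm m k by apply: ler_wpM2l.
  set N := nrm m (vadd z (vsc s k)) in h1 *.
  have h4 : 0 <= M * (N + nrm m z - s * e) by apply: mulr_ge0; lra.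
  nra.
have ple : forall z s k, 0 <= s -> K k -> p z <= M * nrm m (vadd z (vsc s k)) - s.
  move=> z s k s0 Kk; apply: (infL (Hlb z)); by exists s, k.
have pge : forall z L, (forall s k, 0 <= s -> K k -> L <= M * nrm m (vadd z (vsc s k)) - s) -> L <= p z.
  move=> z L HL; apply: (@infG _ _ (M * nrm m (vadd z (vsc 0 k0)) - 0)).
    by exists 0, k0.
  by move=> y [s [k [s0 Kk ->]]]; apply: HL.
have padd : forall z1 z2, p (vadd z1 z2) <= p z1 + p z2.
  move=> z1 z2.
  have key : forall s1 k1 s2 k2, 0 <= s1 -> K k1 -> 0 <= s2 -> K k2 ->
      p (vadd z1 z2) <= (M * nrm m (vadd z1 (vsc s1 k1)) - s1) + (M * nrm m (vadd z2 (vsc s2 k2)) - s2).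
    move=> s1 k1 s2 k2 s10 Kk1 s20 Kk2.
    pose t := s1 / (s1 + s2).
    have t01 : 0 <= t <= 1.
      apply/andP; split; first by apply: divr_ge0 => //; lra.
      case: (ltgtP (s1 + s2) 0) => h; first lra.
        by rewrite /t ler_pdivrMr // mul1r lerDl.
      by rewrite /t h invr0 mulr0.
    have Kk := Kconv k1 k2 t Kk1 Kk2 t01.
    have e1 : vadd (vadd z1 z2) (vsc (s1 + s2) (vadd (vsc t k1) (vsc (1 - t) k2)))
            = vadd (vadd z1 (vsc s1 k1)) (vadd z2 (vsc s2 k2)).
      apply/funext => i; rewrite /vadd /vsc /t.
      case: (ltgtP (s1 + s2) 0) => h; first lra.
        field; lra.
      have s1z : s1 = 0 by lra.
      have s2z : s2 = 0 by lra.
      rewrite s1z s2z; ring.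
    have h1 := ple (vadd z1 z2) (s1 + s2) _ (addr_ge0 s10 s20) Kk.
    rewrite e1 in h1.
    have h2 := nrm_add m (vadd z1 (vsc s1 k1)) (vadd z2 (vsc s2 k2)).
    have h3 := ler_wpM2l (ltW M0) h2.
    lra.
  have h3 : forall s2 k2, 0 <= s2 -> K k2 ->
      p (vadd z1 z2) - (M * nrm m (vadd z2 (vsc s2 k2)) - s2) <= p z1.
    move=> s2 k2 s20 Kk2; apply: pge => s1 k1 s10 Kk1.
    have := key s1 k1 s2 k2 s10 Kk1 s20 Kk2; lra.
  have h4 : p (vadd z1 z2) - p z1 <= p z2.
    apply: pge => s2 k2 s20 Kk2; have := h3 s2 k2 s20 Kk2; lra.
  lra.
have phom : forall t z, 0 < t -> p (vsc t z) <= t * p z.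
  move=> t z t0.
  have h1 : t^-1 * p (vsc t z) <= p z.
    apply: pge => s k s0 Kk.
    have e1 : vadd (vsc t z) (vsc (t * s) k) = vsc t (vadd z (vsc s k)).
      apply/funext => i; rewrite /vadd /vsc; ring.
    have h2 := ple (vsc t z) (t * s) k (mulr_ge0 (ltW t0) s0) Kk.
    rewrite e1 nrm_sc ger0_norm ?(ltW t0) // in h2.
    have h3 : p (vsc t z) <= t * (M * nrm m (vadd z (vsc s k)) - s) by lra.
    have ti : 0 <= t^-1 by rewrite invr_ge0 ltW.
    have := ler_wpM2l ti h3; rewrite mulrA mulVf ?mul1r //; exact: lt0r_neq0.
  have := ler_wpM2l (ltW t0) h1; rewrite mulrA mulfV ?mul1r //; exact: lt0r_neq0.
have p0 : p v0 = 0.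
  apply/eqP; rewrite eq_le; apply/andP; split.
    have := ple v0 0 k0 (lexx _) Kk0.
    have -> : vadd v0 (vsc 0 k0) = v0 by apply/funext => i; rewrite /vadd /vsc /v0; ring.
    by rewrite nrm_v0 mulr0 subr0.
  apply: pge => s k s0 Kk; have := Hlb v0 _ (ex_intro _ s (ex_intro _ k (And3 s0 Kk erefl))).
  by rewrite nrm_v0 mulr0 oppr0.
have ploc : local m p.
  move=> z z' Hzz.
  have He : E z = E z'.
    apply/funext => y; apply/propext; split => -[s [k [s0 Kk ->]]]; exists s, k; split => //;
    congr (_ * _ - _); apply: nrm_ext => i Hi; rewrite /vadd ?Hzz //.
  by rewrite /p He.
have [l Hl] := HB padd phom p0 ploc.
exists l => k Kk.
have h1 := Hl (vsc (-1) k).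
have h2 := ple (vsc (-1) k) 1 k ler01 Kk.
have ev : vadd (vsc (-1) k) (vsc 1 k) = v0.
  by apply/funext => i; rewrite /vadd /vsc /v0; ring.
rewrite ev nrm_v0 mulr0 in h2.
rewrite dot_sc in h1; lra.
Qed.

End Fin.

Ltac elra := repeat match goal with
  | H : is_true (@Order.le ereal_display _ _ _) |- _ => clear H
  | H : is_true (@Order.lt ereal_display _ _ _) |- _ => clear H end; lra.

Section S.
Variables (R : realType) (B : lmodType R) (bf : B -> B -> R).
Hypothesis Hs : symmetric_bilinear bf.
Local Notation q := (qf bf).

Lemma bfC x y : bf x y = bf y x. Proof. exact: Hs.1. Qed.
Lemma bfL a x y z : bf (a *: x + y) z = a * bf x z + bf y z. Proof. exact: Hs.2. Qed.
Lemma bf0l z : bf 0 z = 0.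
Proof. have := bfL 1 0 0 z; rewrite scale1r addr0 mul1r => h; lra. Qed.
Lemma bfDl x y z : bf (x + y) z = bf x z + bf y z.
Proof. by rewrite -{1}(scale1r x) bfL mul1r. Qed.
Lemma bfZl a x z : bf (a *: x) z = a * bf x z.
Proof. by rewrite -(addr0 (a *: x)) bfL bf0l addr0. Qed.
Lemma bfNl x z : bf (- x) z = - bf x z.
Proof. by rewrite -scaleN1r bfZl mulN1r. Qed.
Lemma bfBl x y z : bf (x - y) z = bf x z - bf y z.
Proof. by rewrite bfDl bfNl. Qed.
Lemma bfDr x y z : bf z (x + y) = bf z x + bf z y.
Proof. by rewrite !(bfC z) bfDl. Qed.
Lemma bfZr a x z : bf z (a *: x) = a * bf z x.
Proof. by rewrite !(bfC z) bfZl. Qed.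
Lemma bfBr x y z : bf z (x - y) = bf z x - bf z y.
Proof. by rewrite !(bfC z) bfBl. Qed.
Lemma bf0r z : bf z 0 = 0.
Proof. by rewrite bfC bf0l. Qed.

Lemma qfB b a : q (b - a) = q b - bf b a + q a.
Proof. rewrite /qf bfBl !bfBr (bfC a b); lra. Qed.

Lemma ninf_of (r : R) (y : \bar R) : (r%:E <= y)%E -> y <> -oo%E.
Proof. by case: y. Qed.

Section Phi.
Variable A : set B.
Hypothesis HA : q_positive bf A.

Lemma Phi_le x a : A a -> ((bf x a - q a)%:E <= PhiA bf A x)%E.
Proof. move=> Aa; apply: ereal_sup_ubound; by exists a. Qed.

Lemma Phi_A a : A a -> PhiA bf A a = (q a)%:E.
Proof.
move=> Aa; apply/eqP; rewrite eq_le; apply/andP; split.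
  apply: ge_ereal_sup => _ [a' Aa' <-]; rewrite lee_fin.
  have := HA.2 a a' Aa Aa'; rewrite qfB; lra.
have := Phi_le a Aa; rewrite /qf; congr (_ <= _)%E; congr (_%:E); lra.
Qed.

Lemma Phi_nninf x : PhiA bf A x <> -oo%E.
Proof. have [a Aa] := HA.1; exact: ninf_of (Phi_le x Aa). Qed.

Let F := conj_at bf (PhiA bf A).

Lemma conj_ge c b : ((bf c b)%:E - PhiA bf A c <= F b)%E.
Proof. apply: ereal_sup_ubound; by exists c. Qed.

Lemma conj_ge_Phi b : (PhiA bf A b <= F b)%E.
Proof.
apply: ge_ereal_sup => _ [a Aa <-].
have := conj_ge a b; rewrite Phi_A // bfC; by [].
Qed.

Lemma conj_ge_q b : ((q b)%:E <= F b)%E.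
Proof.
have h1 := conj_ge_Phi b; have h2 := conj_ge b b.
case E: (PhiA bf A b) h1 h2 => [r| |] h1 h2.
- case: (leP (q b) r) => h; first by apply: le_trans h1; rewrite lee_fin.
  apply: le_trans h2; rewrite -EFinB lee_fin /qf in h *; lra.
- by apply: le_trans h1; rewrite leey.
- by exfalso; exact: (Phi_nninf E).
Qed.

Lemma conj_A a : A a -> F a = (q a)%:E.
Proof.
move=> Aa; apply/eqP; rewrite eq_le conj_ge_q andbT.
apply: ge_ereal_sup => _ [c _ <-].
have := Phi_le c Aa.
case E: (PhiA bf A c) => [r| |] h.
- rewrite -EFinB lee_fin; rewrite lee_fin in h; lra.
- by rewrite /= leNye.
- by exfalso; exact: (Phi_nninf E).
Qed.

Lemma conj_convex : convex_fun F.
Proof.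
move=> x y t /andP[t0 t1].
apply: ge_ereal_sup => _ [c _ <-].
case E: (PhiA bf A c) => [r| |].
- have h1 := conj_ge c x; have h2 := conj_ge c y; rewrite E in h1 h2.
  have e : ((bf c (t *: x + (1 - t) *: y))%:E - r%:E = t%:E * ((bf c x)%:E - r%:E) + (1 - t)%:E * ((bf c y)%:E - r%:E))%E.
    rewrite -!EFinB -!EFinM -EFinD bfDr !bfZr; congr (_%:E); ring.
  rewrite e; apply: leeD; apply: lee_wpmul2l => //; rewrite lee_fin; lra.
- by rewrite /= leNye.
- by exfalso; exact: (Phi_nninf E).
Qed.

Lemma conj_wlsc : wlsc bf F.
Proof.
move=> r x Hx.
have Hlt : (r%:E < F x)%E by rewrite ltNge; apply/negP.
have [_ [c _ <-] Hc] := ereal_sup_gt Hlt.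
case E: (PhiA bf A c) Hc => [p| |] Hc.
- rewrite -EFinB lte_fin in Hc.
  exists [:: c], (bf c x - p - r); split; first lra.
  move=> y /= Hy Hle.
  have := Hy c (mem_head _ _); rewrite bfBl ltr_norml => /andP[hy1 hy2].
  have := conj_ge c y; rewrite E -EFinB => h.
  have := le_trans h Hle; rewrite lee_fin (bfC c y) => h2.
  rewrite (bfC x c) in hy1; clear -Hc hy1 h2; lra.
- by rewrite /= ltNge leNye in Hc.
- by exfalso; exact: (Phi_nninf E).
Qed.

Lemma conj_proper : proper_fun F.
Proof.
split; first by move=> x; apply/eqP; exact: ninf_of (conj_ge_q x).
have [a Aa] := HA.1; exists a; by rewrite conj_A // ltey.
Qed.

End Phi.

Lemma Pq_qpos (g : B -> \bar R) : convex_fun g -> (forall b, ((q b)%:E <= g b)%E) ->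
  Pq bf g !=set0 -> q_positive bf (Pq bf g).
Proof.
move=> Hg Hq Hne; split => // b c Hb Hc.
have h1 := Hg b c (1/2); rewrite /Pq /= in Hb Hc; rewrite Hb Hc in h1.
have h2 : ((0:R) < 1 / 2) && (1 / 2 < 1 :> R) by apply/andP; split; lra.
have {}h1 := le_trans (Hq _) (h1 h2).
rewrite -!EFinM -EFinD lee_fin in h1.
rewrite qfB; move: h1; rewrite /qf bfDl !bfDr !bfZl !bfZr (bfC c b); lra.
Qed.

Fixpoint lc (l : nat -> R) (sq : seq B) m : B :=
  if m is m'.+1 then lc l sq m' + l m' *: nth 0 sq m' else 0.

Lemma dot_bf l sq m y : dot m l (fun i => bf y (nth 0 sq i)) = bf y (lc l sq m).
Proof. elim: m => [|m IH] /=; first by rewrite bf0r. by rewrite IH bfDr bfZr. Qed.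

Lemma SEP (g : B -> \bar R) b s :
  wlsc bf g -> convex_fun g -> (forall x, g x <> -oo%E) -> (exists y0, (g y0 < +oo)%E) ->
  (s%:E < g b)%E ->
  exists c (mu : R), forall y (r : R), (g y <= r%:E)%E -> 1 <= bf (y - b) c + mu * (r - s).
Proof.
move=> Hw Hc Hn [y0 Hy0] Hsb.
have [s' [ss' s'g]] : exists s' : R, s < s' /\ (s'%:E < g b)%E.
  case E: (g b) Hsb => [gb| |] Hsb.
  - exists ((s + gb) / 2); rewrite lte_fin in Hsb; split; [elra | rewrite lte_fin; elra].
  - exists (s + 1); split; [elra | by rewrite ltey].
  - by exfalso; apply: (Hn b).
have Hb : (~` [set x | (g x <= s'%:E)%E]) b.
  by move=> /= h; move: s'g; rewrite ltNge h.
have [sq [e [e0 He]]] := Hw s' b Hb.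
pose n := size sq.
pose Phi (y : B) (r : R) := fun i => if (i < n)%N then bf (y - b) (nth 0 sq i) else r - s.
pose K := [set z | exists y r, (g y <= r%:E)%E /\ z = Phi y r].
pose e' := Num.min e (s' - s).
have e'0 : 0 < e' by rewrite lt_min e0 subr_gt0 ss'.
have Kne : K !=set0.
  case E: (g y0) Hy0 => [r0| |] Hy0.
  - by exists (Phi y0 r0), y0, r0; rewrite E.
  - by rewrite ltxx in Hy0.
  - by exfalso; apply: (Hn y0).
have Kconv : forall k1 k2 t, K k1 -> K k2 -> 0 <= t <= 1 -> K (vadd (vsc t k1) (vsc (1 - t) k2)).
  move=> _ _ t [y1 [r1 [h1 ->]]] [y2 [r2 [h2 ->]]] /andP[t0 t1].
  exists (t *: y1 + (1 - t) *: y2), (t * r1 + (1 - t) * r2); split.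
    case: (ltgtP t 0) => ht; first by exfalso; elra.
      case: (ltgtP t 1) => ht1.
      + have := Hc y1 y2 t; rewrite ht ht1 => /(_ isT) h3.
        have e1 : ((t * r1 + (1 - t) * r2)%:E = t%:E * r1%:E + (1 - t)%:E * r2%:E)%E by [].
        apply: (le_trans h3); rewrite e1.
        apply: leeD; apply: lee_wpmul2l => //; rewrite lee_fin; elra.
      + by exfalso; elra.
      + by rewrite ht1 subrr scale1r scale0r addr0 mul1r mul0r addr0.
    by rewrite ht subr0 scale1r scale0r add0r mul1r mul0r add0r.
  apply/funext => i; rewrite /vadd /vsc /Phi; case: ifP => _.
    rewrite !bfBl bfDl !bfZl; ring.
  ring.
have Kfar : forall k, K k -> e' <= nrm n.+1 k.
  move=> _ [y [r [h ->]]] /=.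
  case: (leP s' r) => hr.
    rewrite le_max; apply/orP; right; rewrite /Phi ltnn ger0_norm; last elra.
    have : e' <= s' - s by rewrite /e' ge_min lexx orbT.
    elra.
  have Hgy : (g y <= s'%:E)%E by apply: (le_trans h); rewrite lee_fin ltW.
  have Hnot : ~ (forall c, c \in sq -> `|bf (y - b) c| < e).
    by move=> H; apply: (He y H).
  have [c [cin hc]] : exists c, c \in sq /\ e <= `|bf (y - b) c|.
    apply: contrapT => H; apply: Hnot => c cin; rewrite ltNge; apply/negP => hc; apply: H.
    by exists c.
  rewrite le_max; apply/orP; left.
  have hi : (index c sq < n)%N by rewrite index_mem.
  have := nrm_ge (Phi y r) hi; rewrite /Phi hi nth_index // => h3.
  have : e' <= e by rewrite /e' ge_min lexx.
  elra.
have [l Hl] := SEPfin e'0 Kne Kconv Kfar.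
exists (lc l sq n), (l n) => y r h.
have := Hl _ (ex_intro _ y (ex_intro _ r (conj h erefl))) => /=.
rewrite /Phi ltnn (@dot_extz R n l _ (fun i => bf (y - b) (nth 0 sq i))); last first.
  by move=> i Hi; rewrite Hi.
by rewrite dot_bf.
Qed.

Lemma minor (g : B -> \bar R) b s c mu : (forall x, g x <> -oo%E) -> 0 < mu ->
  (forall y (r : R), (g y <= r%:E)%E -> 1 <= bf (y - b) c + mu * (r - s)) ->
  exists c' (al : R), (forall y, ((bf y c' - al)%:E <= g y)%E) /\ s < bf b c' - al.
Proof.
move=> Hn mu0 H.
pose M := mu^-1.
have M0 : 0 < M by rewrite invr_gt0.
have Mmu : M * mu = 1 by rewrite mulVf // lt0r_neq0.
exists ((- M) *: c), (- (s + M * (1 + bf b c))); split.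
  move=> y; case E: (g y) => [r| |].
  - have := H y r; rewrite E lexx => /(_ isT); rewrite lee_fin bfZr bfBl => h.
    have h4 : 0 <= M * (bf y c - bf b c - 1) + (r - s).
      have -> : M * (bf y c - bf b c - 1) + (r - s) = M * (bf y c - bf b c + mu * (r - s) - 1).
        by rewrite -[in LHS](mul1r (r - s)) -Mmu; ring.
      apply: mulr_ge0; elra.
    elra.
  - by rewrite leey.
  - by exfalso; apply: (Hn y).
rewrite bfZr; elra.
Qed.

Lemma KEY (g : B -> \bar R) b s : wlsc bf g -> convex_fun g -> proper_fun g -> (s%:E < g b)%E ->
  exists c (al : R), (forall y, ((bf y c - al)%:E <= g y)%E) /\ s < bf b c - al.
Proof.
move=> Hw Hc [Hn' Hdom] Hsb.
have Hn : forall x, g x <> -oo%E by move=> x; apply/eqP.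
have [y0 Hy0] := Hdom.
have [r0 Er0] : exists r0 : R, g y0 = r0%:E.
  case E: (g y0) Hy0 => [r0| |] Hy0; [by exists r0 | by rewrite ltxx in Hy0 | by exfalso; apply: (Hn y0)].
have [c [mu H]] := SEP Hw Hc Hn Hdom Hsb.
case: (ltgtP mu 0) => hmu.
- exfalso.
  pose X := bf (y0 - b) c + mu * (r0 - s).
  pose T := (`|X| + 1) / (- mu).
  have nX := normr_ge0 X.
  have T0 : 0 <= T by apply: divr_ge0; elra.
  have hle : r0 <= r0 + T by elra.
  have := H y0 (r0 + T); rewrite Er0 lee_fin => /(_ hle).
  have eT : mu * T = - (`|X| + 1).
    by rewrite /T; field; rewrite lt_eqF.
  have hX : X <= `|X| by exact: ler_norm.
  rewrite /X in hX eT; elra.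
- exact: minor Hn hmu H.
- have hlt : ((r0 - 1)%:E < g y0)%E by rewrite Er0 lte_fin; elra.
  have [c0 [mu0 H0]] := SEP Hw Hc Hn Hdom hlt.
  have mu0p : 0 < mu0.
    have := H0 y0 r0; rewrite Er0 lexx subrr bf0l add0r => /(_ isT); elra.
  have [c1 [al1 [Hm1 _]]] := minor Hn mu0p H0.
  pose k := Num.max 0 (s - (bf b c1 - al1)) + 1.
  have m1 : 0 <= Num.max 0 (s - (bf b c1 - al1)) by rewrite le_max lexx.
  have m2 : s - (bf b c1 - al1) <= Num.max 0 (s - (bf b c1 - al1)) by rewrite le_max lexx orbT.
  have k0 : 0 <= k by rewrite /k; elra.
  have kge : s - (bf b c1 - al1) < k by rewrite /k; elra.
  exists (c1 - k *: c), (al1 - k - k * bf b c); split.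
    move=> y; case E: (g y) => [r| |].
    - have h1 := Hm1 y; rewrite E lee_fin in h1.
      have := H y r; rewrite E lexx => /(_ isT); rewrite hmu mul0r addr0 bfBl => h2.
      have h3 : 0 <= k * (bf y c - bf b c - 1) by apply: mulr_ge0; elra.
      rewrite lee_fin bfBr bfZr; elra.
    - by rewrite leey.
    - by exfalso; apply: (Hn y).
  rewrite bfBr bfZr; elra.
Qed.

End S.


Unset Implicit Arguments.
Theorem mainTheorem8 (R : realType) (B : lmodType R) (bf : B -> B -> R)
  (A : set B) :
  SSD_space bf -> q_positive bf A ->
  let P := Pq bf (conj_at bf (PhiA bf A)) in
  [/\ q_representable bf P, A `<=` P &
      forall C : set B, q_representable bf C -> A `<=` C -> P `<=` C].
Proof.
move=> [_ Hs] HA P.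
have AP : A `<=` P by move=> a Aa; rewrite /P /Pq /=; exact: (conj_A Hs HA Aa).
split => //.
- split.
  + apply: (Pq_qpos Hs).
    * exact: (conj_convex Hs HA).
    * exact: (conj_ge_q Hs HA).
    * have [a Aa] := HA.1; exists a; exact: AP.
  + exists (conj_at bf (PhiA bf A)); split => //.
    * exact: (conj_wlsc Hs HA).
    * exact: (conj_proper Hs HA).
    * exact: (conj_convex Hs HA).
    * exact: (conj_ge_q Hs HA).
- move=> C [HC [g [Hw Hp Hc Hq HgC]]] AC b Pb.
  rewrite -HgC /Pq /=.
  apply/eqP; rewrite eq_le Hq andbT.
  rewrite leNgt; apply/negP => Hlt.
  have [c [al [Hm Hb]]] := KEY Hs Hw Hc Hp Hlt.
  have HPhi : (PhiA bf A c <= al%:E)%E.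
    apply: ge_ereal_sup => _ [a Aa <-]; rewrite lee_fin.
    have Ca : Pq bf g a by rewrite HgC; exact: AC.
    have := Hm a; rewrite /Pq /= in Ca; rewrite Ca lee_fin (bfC Hs a c).
    by move=> h; elra.
  have := conj_ge bf A c b; rewrite /P /Pq /= in Pb; rewrite Pb.
  case E: (PhiA bf A c) HPhi => [p| |] HPhi.
  + rewrite -EFinB !lee_fin in HPhi *; rewrite (bfC Hs c b); move=> h; clear -HPhi h Hb; lra.
  + by [].
  + by exfalso; exact: (Phi_nninf HA E).
Qed.
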